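(* Let $q\ge5$ and let $\mathcal O$ be a $G_q$-orbit of $E_{n\Gamma}$-lines. Then $\Pi_{\overline{1_{\mathcal C}}}+2\Pi_{2_{\mathcal C}}+3\Pi_{3_{\mathcal C}}=q+1$ and $\Pi_{0_{\mathcal C}}=\Pi_{2_{\mathcal C}}+2\Pi_{3_{\mathcal C}}$ for all $q$; and if $q\not\equiv0\pmod3$, then $P_{1_\Gamma}+2P_T+3P_{3_\Gamma}=q+1$ and $P_{0_\Gamma}=P_T+2P_{3_\Gamma}$.
   Context: Let $\mathbb F_q$ be the field of order $q$ and $\mathrm{PG}(3,q)$ the projective space with points $\mathbf P(x_0,x_1,x_2,x_3)$. For $t\in\mathbb F_q$ put $P(t)=\mathbf P(t^3,t^2,t,1)$, and $P(\infty)=\mathbf P(1,0,0,0)$; the twisted cubic is $\mathcal C=\{P(t):t\in\mathbb F_q\cup\{\infty\}\}$ and $G_q$ is the group of projectivities fixing $\mathcal C$. The osculating plane at $P(t)$ is $x_0-3tx_1+3t^2x_2-t^3x_3=0$ ($t\in\mathbb F_q$) and $x_3=0$ at $P(\infty)$; these are the $\Gamma$-planes. The tangent at $P(t)$, $t\in\mathbb F_q$, is the line through $P(t)$ and $\mathbf P(3t^2,2t,1,0)$; at $P(\infty)$ it is the line through $\mathbf P(1,0,0,0),\mathbf P(0,1,0,0)$. A real chord joins two distinct points of $\mathcal C$; an imaginary chord joins $P(\tau),P(\tau^q)$, $\tau\in\mathbb F_{q^2}\setminus\mathbb F_q$; chords are real chords, tangents and imaginary chords. An axis is the intersection of two distinct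 osculating planes at points of $\mathcal C$, or of the osculating planes at conjugate points $P(\tau),P(\tau^q)$. An $E_{n\Gamma}$-line is a line with no point of $\mathcal C$, not contained in a $\Gamma$-plane, which is neither a chord nor an axis. Plane types: a $d_{\mathcal C}$-plane ($d\in\{0,2,3\}$) contains exactly $d$ points of $\mathcal C$; a $\overline{1_{\mathcal C}}$-plane is a non-$\Gamma$-plane containing exactly one point of $\mathcal C$. Point types for $q\not\equiv 0\pmod 3$: $T$-points are points off $\mathcal C$ on a tangent; $\mu_\Gamma$-points ($\mu\in\{0,1,3\}$) are points off $\mathcal C$ lying in exactly $\mu$ distinct $\Gamma$-planes. For a $G_q$-orbit $\mathcal O$ of lines, $\Pi_\pi$ = number of $\pi$-planes through a line of $\mathcal O$, $P_{\mathfrak p}$ = number of $\mathfrak p$-points on a line of $\mathcal O$ (independent of the line). *)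

(* Defs.v *)
(* PG(3,q) modelled by subspaces of F^4 = 'rV[F]_4, each
   subspace represented canonically by its generated square matrix <<A>>%MS. *)
From HB Require Import structures.
From mathcomp Require Import all_boot all_order all_algebra all_field.
Set Implicit Arguments. Unset Strict Implicit. Unset Printing Implicit Defensive.
Import GRing.Theory.
Local Open Scope ring_scope.

Definition vec4 {K : fieldType} (a b c d : K) : 'rV[K]_4 :=
  \row_(i < 4) [:: a; b; c; d]`_i.

Definition ppt {K : fieldType} (v : 'rV[K]_4) : 'M[K]_4 := <<v>>%MS.

Definition Cpt {K : fieldType} (t : K) : 'M[K]_4 := ppt (vec4 (t ^+ 3) (t ^+ 2) t 1).
Definition Cinf (K : fieldType) : 'M[K]_4 := ppt (vec4 (1 : K) 0 0 0).

Definition plane_of {K : fieldType} (c : 'rV[K]_4) : 'M[K]_4 := <<kermx c^T>>%MS.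

Definition osc {K : fieldType} (t : K) : 'M[K]_4 :=
  plane_of (vec4 1 (- (3 * t)) (3 * t ^+ 2) (- t ^+ 3)).
Definition osc_inf (K : fieldType) : 'M[K]_4 := plane_of (vec4 (0 : K) 0 0 1).

Definition tangent {K : fieldType} (t : K) : 'M[K]_4 :=
  <<(Cpt t + ppt (vec4 (3 * t ^+ 2) (2 * t) 1 0))%MS>>%MS.
Definition tangent_inf (K : fieldType) : 'M[K]_4 :=
  <<(ppt (vec4 (1 : K) 0 0 0) + ppt (vec4 (0 : K) 1 0 0))%MS>>%MS.

Definition subspaces_of_dim (F : finFieldType) (r : nat) : {set 'M[F]_4} :=
  [set <<A>>%MS | A : 'M[F]_4 & \rank A == r].
Definition points (F : finFieldType) := subspaces_of_dim F 1.
Definition lines  (F : finFieldType) := subspaces_of_dim F 2.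
Definition planes (F : finFieldType) := subspaces_of_dim F 3.

Definition curve (F : finFieldType) : {set 'M[F]_4} :=
  Cinf F |: [set Cpt t | t : F].

Definition Gamma_planes (F : finFieldType) : {set 'M[F]_4} :=
  osc_inf F |: [set osc t | t : F].

Definition extL {F : finFieldType} (L : fieldExtType F) (A : 'M[F]_4) : 'M[L]_4 :=
  map_mx (in_alg L) A.

Definition not_in_base {F : finFieldType} (L : fieldExtType F) (tau : L) : Prop :=
  ~ exists a : F, tau = in_alg L a.

Definition real_chord {F : finFieldType} (l : 'M[F]_4) : Prop :=
  exists P Q, [/\ P \in curve F, Q \in curve F, P != Q & (l == P + Q)%MS].

Definition is_tangent {F : finFieldType} (l : 'M[F]_4) : Prop :=
  (exists t : F, (l == tangent t)%MS) \/ (l == tangent_inf F)%MS.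

Definition imaginary_chord {F : finFieldType} (L : fieldExtType F) (l : 'M[F]_4) : Prop :=
  exists tau : L, not_in_base tau /\
    (extL L l == Cpt tau + Cpt (tau ^+ #|F|))%MS.

Definition is_chord {F : finFieldType} (L : fieldExtType F) (l : 'M[F]_4) : Prop :=
  real_chord l \/ is_tangent l \/ imaginary_chord L l.

Definition is_axis {F : finFieldType} (L : fieldExtType F) (l : 'M[F]_4) : Prop :=
  (exists H1 H2, [/\ H1 \in Gamma_planes F, H2 \in Gamma_planes F, H1 != H2
                    & (l == H1 :&: H2)%MS])
  \/ (exists tau : L, not_in_base tau /\
        (extL L l == osc tau :&: osc (tau ^+ #|F|))%MS).

Definition EnGamma_line {F : finFieldType} (L : fieldExtType F) (l : 'M[F]_4) : Prop :=
  [/\ l \in lines F,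
      (forall P, P \in curve F -> ~~ (P <= l)%MS),
      (forall H, H \in Gamma_planes F -> ~~ (l <= H)%MS),
      ~ is_chord L l
    & ~ is_axis L l].

Definition nC {F : finFieldType} (H : 'M[F]_4) : nat :=
  #|[set P in curve F | (P <= H)%MS]|.

Definition Pi_d {F : finFieldType} (l : 'M[F]_4) (d : nat) : nat :=
  #|[set H in planes F | (l <= H)%MS & nC H == d]|.
Definition Pi_1bar {F : finFieldType} (l : 'M[F]_4) : nat :=
  #|[set H in planes F | [&& (l <= H)%MS, nC H == 1%N & H \notin Gamma_planes F]]|.

Definition nGamma {F : finFieldType} (P : 'M[F]_4) : nat :=
  #|[set H in Gamma_planes F | (P <= H)%MS]|.

Definition T_point {F : finFieldType} (P : 'M[F]_4) : bool :=
  [&& P \in points F, P \notin curve F &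
      [exists t : F, (P <= tangent t)%MS] || (P <= tangent_inf F)%MS].

Definition muGamma_point {F : finFieldType} (mu : nat) (P : 'M[F]_4) : bool :=
  [&& P \in points F, P \notin curve F & nGamma P == mu].

Definition P_T {F : finFieldType} (l : 'M[F]_4) : nat :=
  #|[set P | T_point P & (P <= l)%MS]|.
Definition P_muGamma {F : finFieldType} (l : 'M[F]_4) (mu : nat) : nat :=
  #|[set P | muGamma_point mu P & (P <= l)%MS]|.

(* Main.v *)
Require Import Defs.
From mathcomp Require Import all_boot all_order all_algebra all_field.
From mathcomp Require Import ring zify.
Set Implicit Arguments. Unset Strict Implicit. Unset Printing Implicit Defensive.
Import GRing.Theory.
Local Open Scope ring_scope.

Section Vec.
Variable K : fieldType.

Lemma vec4E (x : 'rV[K]_4) : x = vec4 (x 0 0) (x 0 1) (x 0 2) (x 0 3).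
Proof.
apply/rowP => i; rewrite mxE.
by case: i => [[|[|[|[|i]]]] Hi] //=; congr (x 0 _); apply: val_inj.
Qed.

Lemma vec4_add (a b c d a' b' c' d' : K) :
  vec4 a b c d + vec4 a' b' c' d' = vec4 (a + a') (b + b') (c + c') (d + d').
Proof. by apply/rowP => i; rewrite !mxE; case: i => [[|[|[|[|i]]]] Hi]. Qed.

Lemma vec4_scale (k a b c d : K) :
  k *: vec4 a b c d = vec4 (k * a) (k * b) (k * c) (k * d).
Proof. by apply/rowP => i; rewrite !mxE; case: i => [[|[|[|[|i]]]] Hi]. Qed.

Lemma vec4_inj (a b c d a' b' c' d' : K) :
  vec4 a b c d = vec4 a' b' c' d' -> [/\ a = a', b = b', c = c' & d = d'].
Proof.
move=> E.
have e i : vec4 a b c d 0 i = vec4 a' b' c' d' 0 i by rewrite E.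
move: (e 0) (e 1) (e 2%:R) (e 3%:R); rewrite !mxE /=.
done.
Qed.

Lemma vec4_eq0 (a b c d : K) :
  (vec4 a b c d == 0) = [&& a == 0, b == 0, c == 0 & d == 0].
Proof.
apply/eqP/and4P => [E|[/eqP-> /eqP-> /eqP-> /eqP->]].
  have : vec4 a b c d = vec4 0 0 0 0.
    by rewrite E; apply/rowP => i; rewrite !mxE; case: i => [[|[|[|[|i]]]] Hi].
  by case/vec4_inj => -> -> -> ->.
by apply/rowP => i; rewrite !mxE; case: i => [[|[|[|[|i]]]] Hi].
Qed.

Lemma vec4_dot (a b c d c0 c1 c2 c3 : K) :
  vec4 a b c d *m (vec4 c0 c1 c2 c3)^T = (a * c0 + b * c1 + c * c2 + d * c3)%:M.
Proof.
rewrite [LHS]mx11_scalar; congr (_%:M).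
by rewrite !mxE !big_ord_recl big_ord0 !mxE /= addr0 !addrA.
Qed.

Lemma sc11_eq0 (a : K) : (a%:M == 0 :> 'M[K]_1) = (a == 0).
Proof.
apply/eqP/eqP => [/matrixP/(_ 0 0)|->]; last by apply/matrixP => i j; rewrite !mxE mul0rn.
by rewrite !mxE.
Qed.

Lemma mem_plane (a b c d c0 c1 c2 c3 : K) :
  (<<vec4 a b c d>> <= plane_of (vec4 c0 c1 c2 c3))%MS =
  (a * c0 + b * c1 + c * c2 + d * c3 == 0).
Proof.
by rewrite /plane_of !genmxE sub_kermx vec4_dot sc11_eq0.
Qed.

End Vec.

Section Sub.
Variable F : finFieldType.
Implicit Types (X Y l H P : 'M[F]_4).

Lemma mem_sub_dim r X :
  (X \in subspaces_of_dim F r) = (<<X>>%MS == X) && (\rank X == r).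
Proof.
apply/imsetP/andP => [[A]|[/eqP E1 /eqP E2]].
  by rewrite inE => /eqP rA ->; rewrite genmx_id genmxE rA.
by exists X; rewrite ?inE ?E2 ?E1.
Qed.

Lemma eq_sub_rank X Y : <<X>>%MS = X -> <<Y>>%MS = Y ->
  (X <= Y)%MS -> (\rank Y <= \rank X)%N -> X = Y.
Proof.
move=> gX gY sXY rYX.
have sYX : (Y <= X)%MS.
  by have [_ <-] := mxrank_leqif_sup sXY; rewrite eqn_leq rYX mxrankS.
by rewrite -gX -gY; apply/genmxP; rewrite sXY sYX.
Qed.

Lemma point_vec P : P \in points F -> exists2 x : 'rV_4, x != 0 & P = <<x>>%MS.
Proof.
rewrite mem_sub_dim => /andP[/eqP gP /eqP rP].
have : P != 0 by rewrite -mxrank_eq0 rP.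
have [i Hi | all0] := pickP (fun i => row i P != 0).
  move=> _; exists (row i P) => //.
  apply/esym/eq_sub_rank; rewrite ?genmx_id //.
    by rewrite genmxE row_sub.
  by rewrite genmxE rank_rV Hi rP.
move=> /eqP []; apply/row_matrixP => i; rewrite row0.
by move/negbFE/eqP: (all0 i).
Qed.

Lemma vec_point (x : 'rV[F]_4) : x != 0 -> <<x>>%MS \in points F.
Proof. by move=> nx; rewrite mem_sub_dim genmx_id eqxx genmxE rank_rV nx. Qed.

Lemma line_plane_meet l H : l \in lines F -> H \in planes F -> ~~ (l <= H)%MS ->
  [set P in points F | (P <= l)%MS && (P <= H)%MS] = [set <<l :&: H>>%MS].
Proof.
rewrite !mem_sub_dim => /andP[/eqP gl /eqP rl] /andP[/eqP gH /eqP rH] nlH.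
have r4 : \rank (l + H)%MS = 4%N.
  have sH : (H <= l + H)%MS by rewrite addsmxSr.
  have le3 : (3 <= \rank (l + H))%N by have := mxrankS sH; rewrite rH.
  have ne3 : \rank (l + H) != 3%N.
    apply/negP => /eqP e; have [_ iff] := mxrank_leqif_sup sH.
    move: iff; rewrite rH e eqxx => /esym sHl.
    by move: nlH; rewrite (submx_trans (addsmxSl l H) sHl).
  have := rank_leq_col (l + H)%MS; lia.
have r1 : \rank (l :&: H)%MS = 1%N.
  have := mxrank_sum_cap l H; rewrite r4 rl rH; lia.
apply/setP => P; rewrite !inE; apply/andP/eqP => [[pP /andP[Pl PH]]|->].
  move: pP; rewrite mem_sub_dim => /andP[/eqP gP /eqP rP].
  apply: eq_sub_rank; rewrite ?genmx_id // ?genmxE ?r1 ?rP //.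
  by rewrite sub_capmx Pl.
split; first by rewrite mem_sub_dim genmx_id eqxx genmxE r1.
by rewrite !genmxE capmxSl capmxSr.
Qed.

Lemma plane_through l P : l \in lines F -> P \in points F -> ~~ (P <= l)%MS ->
  [set H in planes F | (l <= H)%MS && (P <= H)%MS] = [set <<(l + P)%MS>>%MS].
Proof.
rewrite !mem_sub_dim => /andP[/eqP gl /eqP rl] /andP[/eqP gP /eqP rP] nPl.
have r0 : \rank (l :&: P)%MS = 0%N.
  have le1 : (\rank (l :&: P) <= 1)%N by have := mxrankS (capmxSr l P); rewrite rP.
  have ne1 : \rank (l :&: P)%MS != 1%N.
    apply/negP => /eqP e; have [_ iff] := mxrank_leqif_sup (capmxSr l P).
    move: iff; rewrite rP e eqxx => /esym sPc.
    by move: nPl; rewrite (submx_trans sPc (capmxSl l P)).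
  lia.
have r3 : \rank (l + P)%MS = 3%N.
  have := mxrank_sum_cap l P; rewrite r0 rl rP; lia.
apply/setP => H; rewrite !inE; apply/andP/eqP => [[pH /andP[lH PH]]|->].
  move: pH; rewrite mem_sub_dim => /andP[/eqP gH /eqP rH].
  apply/esym/eq_sub_rank; rewrite ?genmx_id // ?genmxE ?r3 ?rH //.
  by rewrite addsmx_sub lH.
split; first by rewrite mem_sub_dim genmx_id eqxx genmxE r3.
by rewrite !genmxE addsmxSl addsmxSr.
Qed.


Lemma rank_add_pt m1 m2 (X : 'M[F]_(m1, 4)) (Y : 'M[F]_(m2, 4)) :
  \rank Y = 1%N -> ~~ (Y <= X)%MS -> \rank (X + Y)%MS = (\rank X).+1.
Proof.
move=> rY nYX.
have r0 : \rank (X :&: Y)%MS = 0%N.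
  have le1 : (\rank (X :&: Y) <= 1)%N by have := mxrankS (capmxSr X Y); rewrite rY.
  have ne1 : \rank (X :&: Y)%MS != 1%N.
    apply/negP => /eqP e; have [_ iff] := mxrank_leqif_sup (capmxSr X Y).
    move: iff; rewrite rY e eqxx => /esym sPc.
    by move: nYX; rewrite (submx_trans sPc (capmxSl X Y)).
  lia.
have := mxrank_sum_cap X Y; rewrite r0 rY; lia.
Qed.

Lemma indep2 (u1 u2 : 'rV[F]_4) a b : u1 != 0 -> ~~ (u2 <= u1)%MS ->
  a *: u1 + b *: u2 = 0 -> a = 0 /\ b = 0.
Proof.
move=> n1 n2 E.
have b0 : b = 0.
  apply/eqP; apply: contraNT n2 => nb.
  have e : b *: u2 = (- a) *: u1 by rewrite scaleNr; apply/eqP; rewrite -addr_eq0 addrC E.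
  have -> : u2 = b^-1 *: ((- a) *: u1) by rewrite -e scalerA mulVf // scale1r.
  by rewrite !scalemx_sub.
split=> //; move: E; rewrite b0 scale0r addr0 => /eqP.
by rewrite scaler_eq0 (negbTE n1) orbF => /eqP.
Qed.

Lemma sub_add_rV (x u1 u2 : 'rV[F]_4) :
  (x <= u1 + u2)%MS -> exists a b, x = a *: u1 + b *: u2.
Proof.
case/sub_addsmxP => -[w1 w2] /= ->; exists (w1 0 0), (w2 0 0).
by rewrite {1}[w1]mx11_scalar {1}[w2]mx11_scalar !mul_scalar_mx.
Qed.

Lemma add_rV_sub (x u1 u2 : 'rV[F]_4) a b :
  x = a *: u1 + b *: u2 -> (x <= u1 + u2)%MS.
Proof. by move=> ->; rewrite addmx_sub_adds ?scalemx_sub. Qed.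

Lemma gen_rV_eq (y y' : 'rV[F]_4) : <<y>>%MS = <<y'>>%MS -> exists c, y = c *: y'.
Proof.
by move=> E; apply/sub_rVP; rewrite -genmxE E genmxE.
Qed.

Lemma card_points_line l : l \in lines F ->
  #|[set P in points F | (P <= l)%MS]| = (#|F| + 1)%N.
Proof.
move=> lL; have := lL; rewrite mem_sub_dim => /andP[/eqP gl /eqP rl].
have [i Hi | all0] := pickP (fun i => row i l != 0); last first.
  have : l != 0 by rewrite -mxrank_eq0 rl.
  move=> /eqP []; apply/row_matrixP => i; rewrite row0.
  by move/negbFE/eqP: (all0 i).
set u1 := row i l.
have [j Hj | allin] := pickP (fun j => ~~ (row j l <= u1)%MS); last first.
  have : (l <= u1)%MS by apply/row_subP => j; move/negbFE: (allin j).
  by move/mxrankS; rewrite rl rank_rV Hi.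
set u2 := row j l.
have r2 : \rank (u1 + u2)%MS = 2%N.
  have n2 : u2 != 0 by apply: contraNneq Hj => E; rewrite -/u2 E sub0mx.
  by rewrite (@rank_add_pt 1 1 u1 u2) // ?rank_rV ?Hi ?n2.
have El : (l == u1 + u2)%MS.
  have s : (u1 + u2 <= l)%MS by rewrite addsmx_sub !row_sub.
  have [_ <-] := mxrank_leqif_sup s; by rewrite r2 rl.
have memL (x : 'rV_4) : (x <= l)%MS = (x <= u1 + u2)%MS.
  by apply/idP/idP => h; apply: submx_trans h _; case/andP: El.
pose f (o : option F) : 'M[F]_4 :=
  if o is Some t then <<(u1 + t *: u2)>>%MS else <<u2>>%MS.
have nz t : u1 + t *: u2 != 0.
  apply/negP => /eqP E; have := @indep2 u1 u2 1 t Hi Hj; rewrite scale1r.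
  by move=> /(_ E) [/eqP]; rewrite oner_eq0.
have n2 : u2 != 0 by apply: contraNneq Hj => E; rewrite -/u2 E sub0mx.
have finj : injective f.
  have key s c : u1 + s *: u2 <> c *: u2.
    move=> E; have := @indep2 u1 u2 1 (s - c) Hi Hj.
    rewrite scale1r scalerBl addrA E subrr => /(_ erefl) [/eqP].
    by rewrite oner_eq0.
  case=> [s|] [t|] //= E0.
  - case/gen_rV_eq: E0 => c E.
    have := @indep2 u1 u2 (1 - c) (s - c * t) Hi Hj.
    rewrite scalerBl scale1r scalerBl -scalerA addrACA -opprD -scalerDr -E subrr.
    move=> /(_ erefl) [/eqP].
    by rewrite subr_eq0 => /eqP <-; rewrite mul1r => /eqP; rewrite subr_eq0 => /eqP ->.
  - by case/gen_rV_eq: E0 => c E; case: (key s c).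
  - by case/esym/gen_rV_eq: E0 => c E; case: (key t c).
have -> : [set P in points F | (P <= l)%MS] = f @: setT.
  apply/setP => P; rewrite inE; apply/andP/imsetP => [[pP]|[o _ ->]].
    have [x nx ->] := point_vec pP.
    rewrite genmxE memL => /sub_add_rV [a [b Ex]].
    have [a0|na] := eqVneq a 0.
      have nb : b != 0.
        by apply: contraNneq nx => b0; rewrite Ex a0 b0 !scale0r addr0.
      exists None => //=; apply: eq_genmx.
      by rewrite Ex a0 scale0r add0r; apply: eqmx_scale.
    exists (Some (b / a)) => //=; apply: eq_genmx.
    have -> : x = a *: (u1 + (b / a) *: u2).
      by rewrite Ex scalerDr scalerA mulrCA mulfV // mulr1.
    exact: eqmx_scale.
  case: o => [t|] /=; split.
  - exact: vec_point.
  - by rewrite genmxE memL (@add_rV_sub _ _ _ 1 t) // scale1r.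
  - exact: vec_point.
  - by rewrite genmxE memL (@add_rV_sub _ _ _ 0 1) // scale0r scale1r add0r.
by rewrite card_imset // cardsT card_option addn1.
Qed.


Lemma card_planes_line l : l \in lines F ->
  #|[set H in planes F | (l <= H)%MS]| = (#|F| + 1)%N.
Proof.
move=> lL; have := lL; rewrite mem_sub_dim => /andP[/eqP gl /eqP rl].
pose m : 'M[F]_4 := <<l^C%MS>>%MS.
have mL : m \in lines F.
  by rewrite mem_sub_dim genmx_id eqxx genmxE mxrank_compl rl.
have full : \rank (l + l^C%MS)%MS = 4%N by apply/eqP; apply: addsmx_compl_full.
have Pnl P : P \in points F -> (P <= m)%MS -> ~~ (P <= l)%MS.
  rewrite mem_sub_dim => /andP[_ /eqP rP] Pm; apply/negP => Pl.
  have : (P <= l :&: l^C%MS)%MS by rewrite sub_capmx Pl -(genmxE (l^C%MS)).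
  by rewrite capmx_compl submx0 -mxrank_eq0 rP.
have mnH H : H \in planes F -> (l <= H)%MS -> ~~ (m <= H)%MS.
  rewrite mem_sub_dim => /andP[_ /eqP rH] lH; apply/negP => mH.
  have : (l + l^C%MS <= H)%MS by rewrite addsmx_sub lH -(genmxE (l^C%MS)).
  by move/mxrankS; rewrite full rH.
pose g P : 'M[F]_4 := <<(l + P)%MS>>%MS.
have -> : [set H in planes F | (l <= H)%MS] = g @: [set P in points F | (P <= m)%MS].
  apply/setP => H; rewrite inE; apply/andP/imsetP => [[pH lH]|[P]].
    have EP := line_plane_meet mL pH (mnH H pH lH).
    set P := <<(m :&: H)%MS>>%MS in EP.
    have : P \in [set P in points F | (P <= m)%MS && (P <= H)%MS] by rewrite EP set11.
    rewrite inE => /andP[pP /andP[Pm PH]].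
    exists P; first by rewrite inE pP Pm.
    have tp := plane_through lL pP (Pnl P pP Pm).
    have : H \in [set H0 in planes F | (l <= H0)%MS && (P <= H0)%MS].
      by rewrite inE pH lH PH.
    by rewrite tp inE => /eqP.
  rewrite inE => /andP[pP Pm] ->.
  have tp := plane_through lL pP (Pnl P pP Pm).
  have : g P \in [set <<(l + P)%MS>>%MS] by rewrite inE.
  by rewrite -tp inE => /andP[-> /andP[-> _]].
rewrite card_in_imset; first by apply: card_points_line.
move=> P Q; rewrite !inE => /andP[pP Pm] /andP[pQ Qm] E.
have tp := plane_through lL pP (Pnl P pP Pm).
have tq := plane_through lL pQ (Pnl Q pQ Qm).
have gpP : g P \in planes F.
  have : g P \in [set <<(l + P)%MS>>%MS] by rewrite inE.
  by rewrite -tp inE => /andP[].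
have lg : (l <= g P)%MS by rewrite genmxE addsmxSl.
have M := line_plane_meet mL gpP (mnH _ gpP lg).
have hP : P \in [set X in points F | (X <= m)%MS && (X <= g P)%MS].
  by rewrite inE pP Pm genmxE addsmxSr.
have hQ : Q \in [set X in points F | (X <= m)%MS && (X <= g P)%MS].
  have QgQ : (Q <= g Q)%MS by rewrite genmxE addsmxSr.
  by move: QgQ; rewrite -E => QgP; rewrite inE pQ Qm QgP.
by move: hP hQ; rewrite M !in_set1 => /eqP e1 /eqP e2; rewrite [LHS]e1 [RHS]e2.
Qed.

End Sub.

Section Count.
Variable T : finType.

Lemma sum_card (A : {set T}) (p : pred T) :
  (\sum_(x in A) (p x : nat) = #|[set x in A | p x]|)%N.
Proof.
have -> : #|[set x in A | p x]| = (\sum_(x | (x \in A) && p x) 1)%N.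
  by rewrite -sum1_card; apply: eq_bigl => x; rewrite inE.
rewrite big_mkcondr /=; apply: eq_bigr => x _; by case: (p x).
Qed.

Lemma partition3 (A : {set T}) (f : T -> nat) : {in A, forall x, f x <= 3}%N ->
  (\sum_(x in A) f x = #|[set x in A | f x == 1]| + 2 * #|[set x in A | f x == 2]|
     + 3 * #|[set x in A | f x == 3]|)%N /\
  (#|A| = #|[set x in A | f x == 0]| + #|[set x in A | f x == 1]|
     + #|[set x in A | f x == 2]| + #|[set x in A | f x == 3]|)%N.
Proof.
move=> le3.
have e k : #|[set x in A | f x == k]| = (\sum_(x in A) (f x == k : nat))%N.
  by rewrite -(sum_card A (fun x => f x == k)).
rewrite !e -sum1_card !big_distrr /= -!big_split /=.
split; apply: eq_bigr => x /le3; case: (f x) => [|[|[|[|k]]]] //=.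
Qed.

End Count.

Lemma double_count (T U : finType) (A : {set T}) (B : {set U}) (r : T -> U -> bool) :
  (\sum_(x in A) #|[set y in B | r x y]| = \sum_(y in B) #|[set x in A | r x y]|)%N.
Proof.
under eq_bigr => x _ do rewrite -(sum_card B (r x)).
rewrite exchange_big /=; apply: eq_bigr => y _.
by rewrite -(sum_card A (fun x => r x y)).
Qed.

Lemma card_sel (T U : finType) (a : T) (f : U -> T) (p : pred T) :
  injective f -> a \notin [set f t | t : U] ->
  #|[set x in a |: [set f t | t : U] | p x]| = (p a + #|[set t | p (f t)]|)%N.
Proof.
move=> finj na; rewrite -(sum_card _ p) big_setU1 //= big_imset /=; last by move=> ? ? _ _; apply: finj.
have -> : [set t | p (f t)] = [set t in setT | p (f t)] by apply/setP => t; rewrite !inE.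
rewrite -(sum_card _ (fun t => p (f t))); congr (_ + _)%N; apply: eq_bigl => t; by rewrite !inE.
Qed.


Lemma roots_lt (F : finFieldType) (p : {poly F}) : p != 0 ->
  (#|[set t | root p t]| < size p)%N.
Proof.
move=> np; rewrite cardE; apply: max_poly_roots => //; last exact: enum_uniq.
by apply/allP => t; rewrite mem_enum inE.
Qed.

Lemma cubic_le3 (F : finFieldType) (c0 c1 c2 c3 : F) :
  ~~ [&& c0 == 0, c1 == 0, c2 == 0 & c3 == 0] ->
  ((c0 == 0%R) + #|[set t | (c0 * t ^+ 3 + c1 * t ^+ 2 + c2 * t + c3 == 0)%R]| <= 3)%N.
Proof.
move=> nz; have [z0|nz0] := eqVneq c0 0.
  pose p := Poly [:: c3; c2; c1].
  have np : p != 0.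
    apply: contraNneq nz => p0; rewrite z0 eqxx /=.
    have e i : p`_i = 0 by rewrite p0 coef0.
    by move: (e 0%N) (e 1%N) (e 2%N); rewrite !coef_Poly /= => -> -> ->; rewrite eqxx.
  have := roots_lt np; have := size_Poly [:: c3; c2; c1]; rewrite -/p.
  have -> : [set t | c0 * t ^+ 3 + c1 * t ^+ 2 + c2 * t + c3 == 0] = [set t | root p t].
    apply/setP => t; rewrite !inE /root horner_Poly /= z0.
    by congr (_ == 0); ring.
  by rewrite /= => a b; rewrite add1n (leq_trans b a).
pose p := Poly [:: c3; c2; c1; c0].
have np : p != 0.
  apply/eqP => p0; have := coef_Poly [:: c3; c2; c1; c0] 3.
  by rewrite -/p p0 coef0 /= => h; rewrite -h eqxx in nz0.
have := roots_lt np; have := size_Poly [:: c3; c2; c1; c0]; rewrite -/p.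
have -> : [set t | c0 * t ^+ 3 + c1 * t ^+ 2 + c2 * t + c3 == 0] = [set t | root p t].
  apply/setP => t; rewrite !inE /root horner_Poly /=.
  by congr (_ == 0); ring.
by rewrite /= => a b; rewrite add0n -ltnS (leq_trans b a).
Qed.

Section Curve.
Variable F : finFieldType.

Lemma Cpt_plane (t c0 c1 c2 c3 : F) :
  (Cpt t <= plane_of (vec4 c0 c1 c2 c3))%MS =
  (c0 * t ^+ 3 + c1 * t ^+ 2 + c2 * t + c3 == 0).
Proof. by rewrite /Cpt /ppt mem_plane; congr (_ == 0); ring. Qed.

Lemma Cinf_plane (c0 c1 c2 c3 : F) :
  (Cinf F <= plane_of (vec4 c0 c1 c2 c3))%MS = (c0 == 0).
Proof. by rewrite /Cinf /ppt mem_plane; congr (_ == 0); ring. Qed.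

Lemma Cpt_osc (t s : F) : (Cpt t <= osc s)%MS = (t == s).
Proof.
rewrite /osc Cpt_plane.
have -> : 1 * t ^+ 3 + - (3 * s) * t ^+ 2 + 3 * s ^+ 2 * t + - s ^+ 3 = (t - s) ^+ 3 by ring.
by rewrite expf_eq0 /= subr_eq0.
Qed.

Lemma Cpt_oscinf (t : F) : (Cpt t <= osc_inf F)%MS = false.
Proof.
rewrite /osc_inf Cpt_plane.
have -> : 0 * t ^+ 3 + 0 * t ^+ 2 + 0 * t + 1 = 1 :> F by ring.
by rewrite oner_eq0.
Qed.

Lemma Cinf_osc (t : F) : (Cinf F <= osc t)%MS = false.
Proof. by rewrite /osc Cinf_plane oner_eq0. Qed.

Lemma Cinf_oscinf : (Cinf F <= osc_inf F)%MS.
Proof. by rewrite /osc_inf Cinf_plane. Qed.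

Lemma Cpt_inj : injective (@Cpt F).
Proof.
by move=> s t E; have := Cpt_osc s s; rewrite E Cpt_osc eqxx => /eqP.
Qed.

Lemma Cinf_notin : Cinf F \notin [set Cpt t | t : F].
Proof.
apply/imsetP => -[t _ E]; have := Cinf_oscinf; by rewrite E Cpt_oscinf.
Qed.

Lemma osc_inj : injective (@osc F).
Proof.
by move=> s t E; have := Cpt_osc s s; rewrite E Cpt_osc eqxx => /eqP.
Qed.

Lemma oscinf_notin : osc_inf F \notin [set osc t | t : F].
Proof.
apply/imsetP => -[t _ E]; have := Cinf_oscinf; by rewrite E Cinf_osc.
Qed.

Lemma card_curve : #|curve F| = (#|F| + 1)%N.
Proof.
by rewrite /curve cardsU1 Cinf_notin card_imset; [rewrite addnC | exact: Cpt_inj].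
Qed.

Lemma card_Gamma : #|Gamma_planes F| = (#|F| + 1)%N.
Proof.
by rewrite /Gamma_planes cardsU1 oscinf_notin card_imset; [rewrite addnC | exact: osc_inj].
Qed.

Lemma curve_points P : P \in curve F -> P \in points F.
Proof.
rewrite /curve in_setU1 => /orP[/eqP ->|/imsetP[t _ ->]]; apply: vec_point.
  by rewrite vec4_eq0 oner_eq0.
by rewrite vec4_eq0 oner_eq0 /= !andbF.
Qed.

Lemma plane_of_planes (c : 'rV[F]_4) : c != 0 -> plane_of c \in planes F.
Proof.
move=> nc; rewrite mem_sub_dim /plane_of genmx_id eqxx genmxE mxrank_ker mxrank_tr.
by rewrite rank_rV nc.
Qed.

Lemma Gamma_planes_planes H : H \in Gamma_planes F -> H \in planes F.
Proof.
rewrite /Gamma_planes in_setU1 => /orP[/eqP ->|/imsetP[t _ ->]]; apply: plane_of_planes.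
  by rewrite vec4_eq0 oner_eq0 /= !andbF.
by rewrite vec4_eq0 oner_eq0.
Qed.

Lemma nC_le3 H : H \in planes F -> (nC H <= 3)%N.
Proof.
rewrite mem_sub_dim => /andP[_ /eqP rH].
set K := kermx H^T.
have rK : \rank K = 1%N by rewrite /K mxrank_ker mxrank_tr rH.
have [i Hi | all0] := pickP (fun i => row i K != 0); last first.
  have : K != 0 by rewrite -mxrank_eq0 rK.
  move=> /eqP []; apply/row_matrixP => i; rewrite row0.
  by move/negbFE/eqP: (all0 i).
set c := row i K.
have cH : c *m H^T = 0 by apply/sub_kermxP; rewrite row_sub.
have Hc : (H <= plane_of c)%MS.
  by rewrite /plane_of genmxE sub_kermx -(trmxK H) -trmx_mul cH trmx0.
have le : (nC H <= #|[set P in curve F | (P <= plane_of c)%MS]|)%N.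
  apply: subset_leq_card; apply/subsetP => P; rewrite !inE => /andP[-> PH].
  exact: submx_trans PH Hc.
apply: (leq_trans le).
rewrite /curve card_sel; [|exact: Cpt_inj|exact: Cinf_notin].
rewrite [c]vec4E Cinf_plane.
set c0 := c 0 0; set c1 := c 0 1; set c2 := c 0 2%:R; set c3 := c 0 3%:R.
have -> : [set t | (Cpt t <= plane_of (vec4 c0 c1 c2 c3))%MS] =
  [set t | (c0 * t ^+ 3 + c1 * t ^+ 2 + c2 * t + c3 == 0)%R].
  by apply/setP => t; rewrite !inE Cpt_plane.
apply: cubic_le3; rewrite -vec4_eq0 -vec4E.
exact: Hi.
Qed.

End Curve.

Section Pts.
Variable F : finFieldType.

Definition phi (x0 x1 x2 x3 s : F) : F :=
  (- x3) * s ^+ 3 + (3 * x2) * s ^+ 2 + (- (3 * x1)) * s + x0.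

Lemma P_osc (x0 x1 x2 x3 s : F) :
  (<<vec4 x0 x1 x2 x3>> <= osc s)%MS = (phi x0 x1 x2 x3 s == 0).
Proof. by rewrite /osc mem_plane /phi; congr (_ == 0); ring. Qed.

Lemma P_oscinf (x0 x1 x2 x3 : F) :
  (<<vec4 x0 x1 x2 x3>> <= osc_inf F)%MS = (x3 == 0).
Proof. by rewrite /osc_inf mem_plane; congr (_ == 0); ring. Qed.

Lemma nGamma_vec (x0 x1 x2 x3 : F) :
  nGamma <<vec4 x0 x1 x2 x3>>%MS =
  ((x3 == 0%R) + #|[set s | phi x0 x1 x2 x3 s == 0%R]|)%N.
Proof.
rewrite /nGamma /Gamma_planes card_sel; [|exact: osc_inj|exact: oscinf_notin].
rewrite P_oscinf; congr (_ + _)%N; apply: eq_card => s; by rewrite !inE P_osc.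
Qed.

Lemma nGamma_le3 (x0 x1 x2 x3 : F) : 3%:R != 0 :> F ->
  vec4 x0 x1 x2 x3 != 0 -> (nGamma <<vec4 x0 x1 x2 x3>>%MS <= 3)%N.
Proof.
move=> n3 nx; rewrite nGamma_vec -oppr_eq0; apply: cubic_le3.
move: nx; rewrite vec4_eq0; apply: contra => /and4P[h3 h2 h1 h0].
rewrite oppr_eq0 in h3; rewrite oppr_eq0 mulf_eq0 (negbTE n3) /= in h1.
rewrite mulf_eq0 (negbTE n3) /= in h2.
by rewrite h0 h1 h2 h3.
Qed.

Lemma mem_tangent (x : 'rV[F]_4) t :
  (<<x>> <= tangent t)%MS =
  (x <= vec4 (t ^+ 3) (t ^+ 2) t 1 + vec4 (3 * t ^+ 2) (2 * t) 1 0)%MS.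
Proof.
by rewrite /tangent /Cpt /ppt !genmxE (adds_eqmx (genmxE _) (genmxE _)).
Qed.

Lemma mem_tangent_inf (x : 'rV[F]_4) :
  (<<x>> <= tangent_inf F)%MS = (x <= vec4 1 0 0 0 + vec4 0 1 0 0)%MS.
Proof.
by rewrite /tangent_inf /ppt !genmxE (adds_eqmx (genmxE _) (genmxE _)).
Qed.


Lemma roots2_x1 (x0 x1 x2 x3 t1 t2 : F) : t1 != t2 ->
  phi x0 x1 x2 x3 t1 = 0 -> phi x0 x1 x2 x3 t2 = 0 ->
  3 * x1 = 3 * (t1 + t2) * x2 - (t1 ^+ 2 + t1 * t2 + t2 ^+ 2) * x3.
Proof.
move=> nt e1 e2.
have : (t1 - t2) * (3 * (t1 + t2) * x2 - (t1 ^+ 2 + t1 * t2 + t2 ^+ 2) * x3 - 3 * x1) = 0.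
  transitivity (phi x0 x1 x2 x3 t1 - phi x0 x1 x2 x3 t2); first by rewrite /phi; ring.
  by rewrite e1 e2 subrr.
move/eqP; rewrite mulf_eq0 subr_eq0 (negbTE nt) /= subr_eq0 => /eqP.
by move=> ->.
Qed.

Lemma roots2_x0 (x0 x1 x2 x3 t1 : F) : phi x0 x1 x2 x3 t1 = 0 ->
  x0 = x3 * t1 ^+ 3 - 3 * x2 * t1 ^+ 2 + 3 * x1 * t1.
Proof.
move=> e1; apply/eqP; rewrite -subr_eq0; apply/eqP; rewrite -e1 /phi; ring.
Qed.

Lemma r_root (x0 x1 x2 x3 t1 t2 : F) : 3%:R != 0 :> F -> x3 != 0 -> t1 != t2 ->
  phi x0 x1 x2 x3 t1 = 0 -> phi x0 x1 x2 x3 t2 = 0 ->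
  phi x0 x1 x2 x3 (3 * x2 / x3 - t1 - t2) = 0.
Proof.
move=> n3 nx3 nt e1 e2.
have h1 := roots2_x1 nt e1 e2.
have h0 := roots2_x0 e1.
have h1' : x1 = (3 * (t1 + t2) * x2 - (t1 ^+ 2 + t1 * t2 + t2 ^+ 2) * x3) / 3.
  by rewrite -h1; field.
rewrite /phi h0 h1'; field.
by rewrite n3 nx3.
Qed.

Lemma tangent_of_roots (x0 x1 x2 x3 t1 t2 : F) : 3%:R != 0 :> F -> x3 != 0 ->
  t1 != t2 -> phi x0 x1 x2 x3 t1 = 0 -> phi x0 x1 x2 x3 t2 = 0 ->
  3 * x2 = x3 * (2 * t1 + t2) ->
  vec4 x0 x1 x2 x3 = x3 *: vec4 (t1 ^+ 3) (t1 ^+ 2) t1 1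
     + (x3 * (t2 - t1) / 3) *: vec4 (3 * t1 ^+ 2) (2 * t1) 1 0.
Proof.
move=> n3 nx3 nt e1 e2 e3.
have h1 := roots2_x1 nt e1 e2.
have h0 := roots2_x0 e1.
have h2' : x2 = x3 * (2 * t1 + t2) / 3 by rewrite -e3; field.
have h1' : x1 = (3 * (t1 + t2) * x2 - (t1 ^+ 2 + t1 * t2 + t2 ^+ 2) * x3) / 3.
  by rewrite -h1; field.
rewrite !vec4_scale vec4_add h0 h1' h2'; congr vec4; field; by rewrite n3.
Qed.

End Pts.

Section TT.
Variable F : finFieldType.

Lemma Cpt_curve (t : F) : Cpt t \in curve F.
Proof. by rewrite /curve in_setU1; apply/orP; right; apply/imsetP; exists t. Qed.

Lemma Cinf_curve : Cinf F \in curve F.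
Proof. by rewrite /curve in_setU1 eqxx. Qed.

Lemma T_to_2 (x0 x1 x2 x3 : F) : 3%:R != 0 :> F -> vec4 x0 x1 x2 x3 != 0 ->
  <<vec4 x0 x1 x2 x3>>%MS \notin curve F ->
  [exists t : F, (<<vec4 x0 x1 x2 x3>> <= tangent t)%MS]
    || (<<vec4 x0 x1 x2 x3>> <= tangent_inf F)%MS ->
  nGamma <<vec4 x0 x1 x2 x3>>%MS = 2%N.
Proof.
move=> n3 nx nC; case/orP => [/existsP[t]|].
  rewrite mem_tangent => /sub_add_rV [a [b E]].
  move: E; rewrite !vec4_scale vec4_add => E.
  have nb : b != 0.
    apply: contraNneq nC => b0.
    suff -> : <<vec4 x0 x1 x2 x3>>%MS = Cpt t by apply: Cpt_curve.
    have na : a != 0.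
      apply: contraNneq nx => a0; rewrite E a0 b0 vec4_eq0.
      by rewrite !mul0r !addr0 eqxx.
    apply: eq_genmx.
    rewrite E b0 (_ : vec4 _ _ _ _ = a *: vec4 (t ^+ 3) (t ^+ 2) t 1).
      exact: eqmx_scale.
    by rewrite vec4_scale; congr vec4; ring.
  case/vec4_inj: E => e0 e1 e2 e3.
  have Ephi s : phi x0 x1 x2 x3 s = (t - s) ^+ 2 * (a * (t - s) + 3 * b).
    by rewrite /phi e0 e1 e2 e3; ring.
  have h3 : x3 = a by rewrite e3; ring.
  rewrite nGamma_vec (_ : (x3 == 0) = (a == 0)); last by rewrite h3.
  have [a0|na] := eqVneq a 0.
    have -> : [set s | phi x0 x1 x2 x3 s == 0] = [set t].
      apply/setP => s; rewrite !inE Ephi a0 mul0r add0r.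
      by rewrite !mulf_eq0 (negbTE n3) (negbTE nb) !orbF orbb subr_eq0 eq_sym.
    by rewrite cards1.
  have -> : [set s | phi x0 x1 x2 x3 s == 0] = [set t; t + 3 * b / a].
    apply/setP => s; rewrite !inE Ephi.
    have -> : a * (t - s) + 3 * b = a * ((t + 3 * b / a) - s) by field.
    by rewrite !mulf_eq0 (negbTE na) /= orbb !subr_eq0 ![_ == s]eq_sym.
  rewrite cards2.
  suff -> : t != t + 3 * b / a by [].
  apply/eqP => h.
  have : 3 * b / a = (t + 3 * b / a) - t by ring.
  by rewrite -h subrr => /eqP; rewrite !mulf_eq0 invr_eq0 (negbTE na) (negbTE nb) (negbTE n3).
rewrite mem_tangent_inf => /sub_add_rV [a [b E]].
move: E; rewrite !vec4_scale vec4_add => E.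
have nb : b != 0.
  apply: contraNneq nC => b0.
  suff -> : <<vec4 x0 x1 x2 x3>>%MS = Cinf F by apply: Cinf_curve.
  have na : a != 0.
    apply: contraNneq nx => a0; rewrite E a0 b0 vec4_eq0.
    by rewrite !mul0r !addr0 eqxx.
  apply: eq_genmx.
  rewrite E b0 (_ : vec4 _ _ _ _ = a *: vec4 1 0 0 0).
    exact: eqmx_scale.
  by rewrite vec4_scale; congr vec4; ring.
case/vec4_inj: E => e0 e1 e2 e3.
have Ephi s : phi x0 x1 x2 x3 s = (3 * b) * (a / (3 * b) - s).
  rewrite /phi e0 e1 e2 e3; field; by rewrite n3 nb.
have h3 : x3 = 0 by rewrite e3; ring.
rewrite nGamma_vec (_ : (x3 == 0) = true); last by rewrite h3 eqxx.
have -> : [set s | phi x0 x1 x2 x3 s == 0] = [set a / (3 * b)].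
  apply/setP => s; rewrite !inE Ephi.
  by rewrite !mulf_eq0 (negbTE n3) (negbTE nb) /= subr_eq0 eq_sym.
by rewrite cards1.
Qed.


Lemma two_to_T (x0 x1 x2 x3 : F) : 3%:R != 0 :> F ->
  nGamma <<vec4 x0 x1 x2 x3>>%MS = 2%N ->
  [exists t : F, (<<vec4 x0 x1 x2 x3>> <= tangent t)%MS]
    || (<<vec4 x0 x1 x2 x3>> <= tangent_inf F)%MS.
Proof.
move=> n3; rewrite nGamma_vec.
set S := [set s | phi x0 x1 x2 x3 s == 0].
have inS s : (s \in S) = (phi x0 x1 x2 x3 s == 0) by rewrite inE.
have [x30|nx3] := eqVneq x3 0.
  rewrite add1n => -[/eqP /cards1P [t St]].
  have et : phi x0 x1 x2 x3 t = 0 by apply/eqP; rewrite -inS St set11.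
  have [x20|nx2] := eqVneq x2 0.
    apply/orP; right; rewrite mem_tangent_inf.
    apply: (@add_rV_sub _ _ _ _ x0 x1).
    by rewrite !vec4_scale vec4_add x20 x30; congr vec4; ring.
  pose r := x1 / x2 - t.
  have er : phi x0 x1 x2 x3 r = 0.
    rewrite -et /phi /r x30; field; exact: nx2.
  have : r \in S by rewrite inS er.
  rewrite St inE => /eqP rt.
  have h1 : x1 = 2 * t * x2.
    have : x1 = (r + t) * x2 by rewrite /r; field.
    by rewrite rt => ->; ring.
  have h0 : x0 = 3 * t ^+ 2 * x2.
    apply/eqP; rewrite -subr_eq0; apply/eqP; rewrite -et /phi x30 h1; ring.
  apply/orP; left; apply/existsP; exists t; rewrite mem_tangent.
  apply: (@add_rV_sub _ _ _ _ 0 x2).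
  by rewrite !vec4_scale vec4_add h0 h1 x30; congr vec4; ring.
rewrite add0n => /eqP /cards2P [t1 [t2 [nt St]]].
have e1 : phi x0 x1 x2 x3 t1 = 0 by apply/eqP; rewrite -inS St !inE eqxx.
have e2 : phi x0 x1 x2 x3 t2 = 0 by apply/eqP; rewrite -inS St !inE eqxx orbT.
have er := r_root n3 nx3 nt e1 e2.
have : 3 * x2 / x3 - t1 - t2 \in S by rewrite inS er.
rewrite St !inE => /orP[] /eqP rt; apply/orP; left; apply/existsP.
  exists t1; rewrite mem_tangent; apply/add_rV_sub/(tangent_of_roots (t2 := t2)) => //.
  have q : 3 * x2 / x3 = 3 * x2 / x3 - t1 - t2 + t1 + t2 by ring.
  rewrite rt in q; rewrite -[3 * x2](divfK nx3) q; ring.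
exists t2; rewrite mem_tangent; apply/add_rV_sub/(tangent_of_roots (t2 := t1)) => //.
- by rewrite eq_sym.
- have q : 3 * x2 / x3 = 3 * x2 / x3 - t1 - t2 + t1 + t2 by ring.
  rewrite rt in q; rewrite -[3 * x2](divfK nx3) q; ring.
Qed.

End TT.

Lemma three_neq0 (F : finFieldType) : (#|F| %% 3 != 0)%N -> (3%:R : F) != 0.
Proof.
move=> h; apply/negP=> /eqP h3.
have c3 : (3 \in [pchar F])%N by rewrite inE /= h3 eqxx.
have := card_pprimeChar c3.
rewrite /= => E.
move: h; rewrite E.
case: (logn _ _) E => [|k] E.
  by have := finNzRing_gt1 F; rewrite E.
by rewrite expnS modnMr.
Qed.

Close Scope ring_scope.

Theorem proposition3p7 (F : finFieldType) (L : fieldExtType F)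
    (dimL : \dim {: L} = 2%N) (l : 'M[F]_4) :
  (5 <= #|F|)%N -> EnGamma_line L l ->
  [/\ (Pi_1bar l + 2 * Pi_d l 2 + 3 * Pi_d l 3 = #|F| + 1)%N,
      Pi_d l 0 = (Pi_d l 2 + 2 * Pi_d l 3)%N
    & (#|F| %% 3 != 0)%N ->
      (P_muGamma l 1 + 2 * P_T l + 3 * P_muGamma l 3 = #|F| + 1)%N /\
      P_muGamma l 0 = (P_T l + 2 * P_muGamma l 3)%N].
Proof.
move=> _ [lL noC noG _ _].
have offC P : (P <= l)%MS -> P \notin curve F.
  by move=> Pl; apply/negP => /noC; rewrite Pl.
set S := [set H in planes F | (l <= H)%MS].
have cS : #|S| = (#|F| + 1)%N by apply: card_planes_line.
have sumS : (\sum_(H in S) nC H = #|F| + 1)%N.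
  have := double_count S (curve F) (fun H P => (P <= H)%MS); rewrite /nC /= => ->.
  rewrite -card_curve -sum1_card; apply: eq_bigr => P PC.
  have -> : [set H in S | (P <= H)%MS] = [set H in planes F | (l <= H)%MS && (P <= H)%MS].
    by apply/setP => H; rewrite !inE andbA.
  by rewrite plane_through ?cards1 // ?curve_points // noC.
have le3 : {in S, forall H, nC H <= 3}%N.
  by move=> H; rewrite inE => /andP[pH _]; apply: nC_le3.
have [pS1 pS2] := partition3 le3.
have eS d : [set H in S | nC H == d] = [set H in planes F | (l <= H)%MS & nC H == d].
  by apply/setP => H; rewrite !inE andbA.
have e1 : Pi_1bar l = Pi_d l 1.
  rewrite /Pi_1bar /Pi_d; apply: eq_card => H; rewrite in_set [in RHS]in_set.
  case lH : (l <= H)%MS; rewrite ?andbF //=.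
  case: (H \in Gamma_planes F) (noG H) => [/(_ isT)|_]; first by rewrite lH.
  by rewrite andbT.
rewrite -/S !eS in pS1 pS2.
split.
- rewrite e1 /Pi_d; lia.
- rewrite /Pi_d; lia.
move=> /three_neq0 n3.
set T := [set P in points F | (P <= l)%MS].
have cT : #|T| = (#|F| + 1)%N by apply: card_points_line.
have sumT : (\sum_(P in T) nGamma P = #|F| + 1)%N.
  have := double_count T (Gamma_planes F) (fun P H => (P <= H)%MS); rewrite /nGamma /= => ->.
  rewrite -card_Gamma -sum1_card; apply: eq_bigr => H HG.
  have -> : [set P in T | (P <= H)%MS] = [set P in points F | (P <= l)%MS && (P <= H)%MS].
    by apply/setP => P; rewrite !inE andbA.
  by rewrite line_plane_meet ?cards1 ?Gamma_planes_planes ?noG.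
have le3T : {in T, forall P, nGamma P <= 3}%N.
  move=> P; rewrite inE => /andP[/point_vec [x nx ->] _].
  by rewrite [x]vec4E; apply: nGamma_le3 => //; rewrite -vec4E.
have [pT1 pT2] := partition3 le3T.
have eT d : [set P in T | nGamma P == d] = [set P | muGamma_point d P & (P <= l)%MS].
  apply/setP => P; rewrite !inE /muGamma_point.
  case Pl : (P <= l)%MS; rewrite ?andbF //= (offC P Pl) /=.
  by rewrite !andbT.
have eTT : [set P in T | nGamma P == 2] = [set P | T_point P & (P <= l)%MS].
  apply/setP => P; rewrite !inE /T_point.
  case Pl : (P <= l)%MS; rewrite ?andbF //= (offC P Pl) /= andbT.
  case pP : (P \in points F) => //=.
  have [x nx Px] := point_vec pP.
  move: nx; rewrite Px [x]vec4E => nx.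
  rewrite andbT; apply/eqP/idP => [|hT]; first exact: two_to_T.
  by apply: T_to_2 => //; rewrite -vec4E -Px offC.
have eT' d : #|[set P in T | nGamma P == d]| = P_muGamma l d by rewrite eT.
have eTT' : #|[set P in T | nGamma P == 2]| = P_T l by rewrite eTT.
rewrite eTT' !eT' sumT in pT1; rewrite eTT' !eT' cT in pT2.
split; lia.
Qed.
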